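(* Let $f:\mathbb{R}^n\to\mathbb{R}$ be continuously differentiable and bounded below, let $s$ be an integer with $0<s<n$, and let $\{\mathbf{x}^k\}$ be the sequence generated by the greedy sparse-simplex method. Then any accumulation point of $\{\mathbf{x}^k\}$ is a CW-minimum of the problem (P): minimize $f(\mathbf{x})$ subject to $\|\mathbf{x}\|_0\le s$.
   Context: $\|\mathbf{x}\|_0$ is the number of nonzero components, $C_s=\{\mathbf{x}:\|\mathbf{x}\|_0\le s\}$, $I_1(\mathbf{x})=\{i:x_i\neq0\}$, $\mathbf{e}_i$ the $i$-th standard basis vector. Greedy sparse-simplex method (all one-dimensional minima below are assumed attained): choose $\mathbf{x}^0\in C_s$. At step $k$: if $\|\mathbf{x}^k\|_0<s$, for each $i=1,\dots,n$ let $t_i\in\operatorname{argmin}_{t\in\mathbb{R}}f(\mathbf{x}^k+t\mathbf{e}_i)$ and $f_i=\min_t f(\mathbf{x}^k+t\mathbf{e}_i)$; let $i_k\in\operatorname{argmin}_i f_i$; if $f_{i_k}<f(\mathbf{x}^k)$ set $\mathbf{x}^{k+1}=\mathbf{x}^k+t_{i_k}\mathbf{e}_{i_k}$, otherwise stop. If $\|\mathbf{x}^k\|_0=s$, for each $i\in I_1(\mathbf{x}^k)$ and $j=1,\dots,n$ let $t_{i,j}\in\operatorname{argmin}_t f(\mathbf{x}^k-x_i^k\mathbf{e}_i+t\mathbf{e}_j)$ and $f_{i,j}=\min_t f(\mathbf{x}^k-x_i^k\mathbf{e}_i+t\mathbf{e}_j)$; let $(i_k,j_k)\in\operatorname{argmin}\{f_{i,j}:i\in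 I_1(\mathbf{x}^k),j=1,\dots,n\}$; if $f_{i_k,j_k}<f(\mathbf{x}^k)$ set $\mathbf{x}^{k+1}=\mathbf{x}^k-x^k_{i_k}\mathbf{e}_{i_k}+t_{i_k,j_k}\mathbf{e}_{j_k}$, otherwise stop. A feasible $\mathbf{x}^*$ is a coordinate-wise (CW) minimum of (P) if either $\|\mathbf{x}^*\|_0<s$ and $f(\mathbf{x}^* )=\min_t f(\mathbf{x}^*+t\mathbf{e}_i)$ for all $i$; or $\|\mathbf{x}^*\|_0=s$ and $f(\mathbf{x}^* )\le\min_t f(\mathbf{x}^*-x_i^*\mathbf{e}_i+t\mathbf{e}_j)$ for all $i\in I_1(\mathbf{x}^* )$, $j=1,\dots,n$. *)

(* Defs.v *)
From HB Require Import structures.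
From mathcomp Require Import all_boot all_order all_algebra.
From mathcomp Require Import all_classical all_reals all_analysis.
Set Implicit Arguments. Unset Strict Implicit. Unset Printing Implicit Defensive.
Import Order.TTheory GRing.Theory Num.Theory.
Import numFieldNormedType.Exports.
Local Open Scope classical_set_scope.
Local Open Scope ring_scope.

Section Defs.
Variables (R : realType) (n : nat).
Notation V := 'rV[R]_n.

Definition norm0 (x : V) : nat := #|[set i : 'I_n | x ord0 i != 0]|.

Definition supp (x : V) : {set 'I_n} := [set i : 'I_n | x ord0 i != 0].

Definition ebasis (i : 'I_n) : V := delta_mx ord0 i.

(* Stopping is encoded as y = x (the sequence then stays
   constant, since the stopping test is repeated with the same outcome). *)
Definition greedy_step (f : V -> R) (s : nat) (x y : V) : Prop :=
  if (norm0 x < s)%N then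
    exists (i : 'I_n) (t : R),
      (forall (i' : 'I_n) (t' : R),
          f (x + t *: ebasis i) <= f (x + t' *: ebasis i')) /\
      y = (if f (x + t *: ebasis i) < f x then x + t *: ebasis i else x)
  else if norm0 x == s then
    exists (i j : 'I_n) (t : R),
      i \in supp x /\
      (forall (i' j' : 'I_n) (t' : R), i' \in supp x ->
          f (x - x ord0 i *: ebasis i + t *: ebasis j)
          <= f (x - x ord0 i' *: ebasis i' + t' *: ebasis j')) /\
      y = (if f (x - x ord0 i *: ebasis i + t *: ebasis j) < f x
           then x - x ord0 i *: ebasis i + t *: ebasis j else x)
  else False.

Definition greedy_seq (f : V -> R) (s : nat) (x : nat -> V) : Prop :=
  (norm0 (x 0%N) <= s)%N /\ forall k, greedy_step f s (x k) (x k.+1).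

Definition CW_min (f : V -> R) (s : nat) (x : V) : Prop :=
  ((norm0 x < s)%N /\
     forall (i : 'I_n) (t : R), f x <= f (x + t *: ebasis i))
  \/
  (norm0 x = s /\
     forall (i j : 'I_n) (t : R), i \in supp x ->
       f x <= f (x - x ord0 i *: ebasis i + t *: ebasis j)).

Definition C1 (f : V -> R) : Prop :=
  (forall x, differentiable f x) /\
  (forall v : V, continuous (fun x => 'd f x v)).

End Defs.

(* Main.v *)
Require Import Defs.
From HB Require Import structures.
From mathcomp Require Import all_boot all_order all_algebra.
From mathcomp Require Import all_classical all_reals all_analysis.
Import Order.TTheory GRing.Theory Num.Theory.
Import numFieldNormedType.Exports.
Local Open Scope classical_set_scope.
Local Open Scope ring_scope.
Set Implicit Arguments. Unset Strict Implicit.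

Section Aux.
Variables (R : realType) (n : nat).
Notation V := 'rV[R]_n.

Lemma nbhs_lt (G : V -> R) (p : V) (c : R) :
  {for p, continuous G} -> G p < c -> \forall z \near p, G z < c.
Proof.
move=> Gc Gp; apply: (Gc [set y | y < c]); apply: open_nbhs_nbhs; split; [exact: open_lt | done].
Qed.

Lemma nbhs_neq (p : V) (i : 'I_n) :
  p ord0 i != 0 -> \forall z \near p, (z : V) ord0 i != 0.
Proof.
move=> pi; apply: (@coord_continuous R 1 n ord0 i p [set y | y != 0]).
apply: open_nbhs_nbhs; split; [exact: open_neq | done].
Qed.

Lemma swap_cont (i j : 'I_n) (t : R) :
  continuous (fun z : V => z - z ord0 i *: ebasis R i + t *: ebasis R j).
Proof.
move=> z; apply: cvgD; [exact: nbhs_filter| |exact: (@cvg_cst _ _ _ _ (nbhs_filter z))].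
apply: cvgB; [exact: nbhs_filter|exact: cvg_id|].
apply: cvgZr_tmp; [exact: nbhs_filter|exact: (@coord_continuous R 1 n ord0 i z)].
Qed.

Lemma add_cont (j : 'I_n) (t : R) :
  continuous (fun z : V => z + t *: ebasis R j).
Proof. move=> z; apply: cvgD; [exact: nbhs_filter|exact: cvg_id | exact: (@cvg_cst _ _ _ _ (nbhs_filter z))]. Qed.

Lemma cluster_ex (x : nat -> V) (p : V) (B : set V) :
  cluster (x @ \oo) p -> nbhs p B -> forall K, exists k, (K <= k)%N /\ B (x k).
Proof.
move=> cl Bp K.
have : (x @ \oo) (x @` [set k | (K <= k)%N]).
  by exists K => // k /= Kk; exists k.
move=> /(cl _ _) /(_ Bp) [z [[k /= Kk <-] Bz]]; by exists k.
Qed.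

Variables (f : V -> R) (s : nat).

Lemma step_le x y : greedy_step f s x y -> f y <= f x.
Proof.
rewrite /greedy_step; case: ifP => _.
  move=> [i [t [_ ->]]]; case: ifP => // /ltW //.
case: ifP => // _ [i [j [t [_ [_ ->]]]]]; case: ifP => // /ltW //.
Qed.

Lemma step_add x y : greedy_step f s x y -> (norm0 x < s)%N ->
  forall i t, f y <= f (x + t *: ebasis R i).
Proof.
move=> G lt; move: G; rewrite /greedy_step lt => -[i [t [H ->]]] i' t'.
case: ifP => [_|/negbT]; first exact: H.
rewrite -leNgt => le; exact: le_trans le (H i' t').
Qed.

Lemma step_swap x y : greedy_step f s x y -> norm0 x = s ->
  forall i j t, i \in supp x ->
  f y <= f (x - x ord0 i *: ebasis R i + t *: ebasis R j).
Proof.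
move=> G e; move: G; rewrite /greedy_step e ltnn eqxx => -[i [j [t [_ [H ->]]]]] i' j' t' Hi.
case: ifP => [_|/negbT]; first exact: H.
rewrite -leNgt => le; exact: le_trans le (H i' j' t' Hi).
Qed.

Lemma step_gt x y : greedy_step f s x y -> (s < norm0 x)%N -> False.
Proof.
move=> G lt; move: G; rewrite /greedy_step ltnNge (ltnW lt) /=.
by rewrite eq_sym (ltn_eqF lt).
Qed.


Lemma norm0E (x : V) : norm0 x = #|supp x|.
Proof.
rewrite /norm0; apply: eq_card => i; rewrite /supp inE.
by apply/idP/idP => [/set_mem|/mem_set].
Qed.

Lemma nbhs_gt (G : V -> R) (p : V) (c : R) :
  {for p, continuous G} -> c < G p -> \forall z \near p, c < G z.
Proof.
move=> Gc Gp; apply: (Gc [set y | c < y]); apply: open_nbhs_nbhs; split; [exact: open_gt | done].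
Qed.

Lemma supp_near (p : V) :
  \forall z \near p, forall l : 'I_n, p ord0 l != 0 -> (z : V) ord0 l != 0.
Proof.
apply: (@filter_forall _ _ (fun l (z : V) => p ord0 l != 0 -> z ord0 l != 0) _ (nbhs_filter p)) => l.
case: (eqVneq (p ord0 l) 0) => pl.
  by apply: nearW => z.
have := nbhs_neq pl; apply: filterS => z zl _ //.
Qed.

End Aux.

Theorem theorem3p3 (R : realType) (n s : nat) (f : 'rV[R]_n -> R)
  (x : nat -> 'rV[R]_n) :
  C1 f ->
  (exists m : R, forall z, m <= f z) ->
  (0 < s < n)%N ->
  greedy_seq f s x ->
  forall p : 'rV[R]_n, cluster (x @ \oo) p -> CW_min f s p.
Proof.
move=> [fd _] _ _ [_ step] p cl.
have fc : continuous f := fun z => differentiable_continuous (fd z).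
have mono : forall k d, f (x (k + d)%N) <= f (x k).
  move=> k; elim=> [|d IH]; first by rewrite addn0.
  by rewrite addnS; apply: le_trans (step_le (step _)) IH.
have fpk : forall k, f p <= f (x k).
  move=> K; rewrite leNgt; apply/negP => lt.
  have [k [Kk Bk]] := cluster_ex cl (nbhs_gt (fc p) lt) K.
  have := mono K (k - K)%N; rewrite subnKC // => le.
  by move: (lt_le_trans Bk le); rewrite ltxx.
have suppsub : forall z : 'rV[R]_n,
    (forall l, p ord0 l != 0 -> z ord0 l != 0) -> (norm0 p <= norm0 z)%N.
  move=> z Hz; rewrite !norm0E; apply: subset_leq_card.
  by apply/fintype.subsetP => l; rewrite !inE; exact: Hz.
have pS : (norm0 p <= s)%N.
  have [k [_ Hk]] := cluster_ex cl (supp_near p) 0.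
  case: (leqP (norm0 (x k)) s) => [le|gt]; last by case: (step_gt (step k) gt).
  exact: leq_trans (suppsub _ Hk) le.
case: (ltnP (norm0 p) s) => [lt|ge].
- left; split=> // j t; rewrite leNgt; apply/negP => H.
  have Hb : \forall z \near p, forall l : 'I_n, p ord0 l = 0 ->
      f ((z : 'rV[R]_n) - z ord0 l *: ebasis R l + t *: ebasis R j) < f p.
    apply: (@filter_forall _ _ (fun l (z : 'rV[R]_n) => p ord0 l = 0 ->
      f (z - z ord0 l *: ebasis R l + t *: ebasis R j) < f p) _ (nbhs_filter p)) => l.
    case: (eqVneq (p ord0 l) 0) => pl.
      have Hn : \forall z \near p,
          f ((z : 'rV[R]_n) - z ord0 l *: ebasis R l + t *: ebasis R j) < f p.
        apply: nbhs_lt; last by rewrite pl scale0r subr0.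
        exact: (continuous_comp (@swap_cont R n l j t p) (fc _)).
      by move: Hn; apply: filterS => z zl _.
    by apply: nearW => z /eqP; rewrite (negbTE pl).
  have Ha : \forall z \near p, f ((z : 'rV[R]_n) + t *: ebasis R j) < f p.
    apply: nbhs_lt H; exact: (continuous_comp (@add_cont R n j t p) (fc _)).
  have [k [_ [[Hak Hbk] Hck]]] := cluster_ex cl (filterI (filterI Ha Hb) (supp_near p)) 0.
  have := fpk k.+1.
  case: (ltngtP (norm0 (x k)) s) => [lk|gk|ek].
  + by move=> le; move: (le_lt_trans le (le_lt_trans (step_add (step k) lk j t) Hak)); rewrite ltxx.
  + by case: (step_gt (step k) gk).
  + have [l lz pl] : exists2 l, l \in supp (x k) & p ord0 l = 0.
      case: (boolP [exists l, (l \in supp (x k)) && (p ord0 l == 0)]).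
        by move=> /existsP [l /andP [lz /eqP pl]]; exists l.
      move=> /existsPn H0; exfalso.
      have sub : supp (x k) \subset supp p.
        apply/fintype.subsetP => l lz; have := H0 l; rewrite lz /= inE; done.
      have := subset_leq_card sub; rewrite -!norm0E ek leqNgt lt; done.
    move=> le; move: (le_lt_trans (le_trans le (step_swap (step k) ek j t lz)) (Hbk l pl)).
    by rewrite ltxx.
- have ps : norm0 p = s by apply/eqP; rewrite eqn_leq pS ge.
  right; split=> // i j t ip; rewrite leNgt; apply/negP => H.
  have Ha : \forall z \near p,
      f ((z : 'rV[R]_n) - z ord0 i *: ebasis R i + t *: ebasis R j) < f p.
    apply: nbhs_lt H; exact: (continuous_comp (@swap_cont R n i j t p) (fc _)).
  have [k [_ [Hak Hck]]] := cluster_ex cl (filterI Ha (supp_near p)) 0.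
  have := fpk k.+1.
  case: (ltngtP (norm0 (x k)) s) => [lk|gk|ek].
  + by move: (leq_ltn_trans (suppsub _ Hck) lk); rewrite ps ltnn.
  + by case: (step_gt (step k) gk).
  + have iz : i \in supp (x k) by rewrite inE; apply: Hck; rewrite inE in ip.
    move=> le; move: (le_lt_trans (le_trans le (step_swap (step k) ek j t iz)) Hak).
    by rewrite ltxx.
Qed.
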